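(* Let $G$ be a simple stochastic game, let $A$ be a subset of the arcs of $G$, and let $\sigma$ be a positional MAX strategy. Then $v^{G}_{\sigma}(x) = v^{G[A,\sigma]}_{\sigma}(x)$ for every vertex $x$ of $G$.
   Context: A simple stochastic game (SSG) $G$ is a finite directed graph whose vertex set $V$ is partitioned into $V_{\max}$ (MAX vertices), $V_{\min}$ (MIN vertices), $V_R$ (random vertices) and a nonempty set $V_S$ (sinks); every vertex of $V_{\max}\cup V_{\min}\cup V_R$ has at least one outgoing arc, every sink has exactly one outgoing arc, which is a self-loop; each random vertex $x$ carries a probability distribution $p_x$ with rational values on its out-neighbourhood, positive on every out-neighbour; each sink $s$ has a rational value $\mathrm{Val}(s)\in[0,1]$. A positional MAX (resp. MIN) strategy assigns to each MAX (resp. MIN) vertex one of its out-neighbours. Given $\sigma,\tau$ and a start vertex $x_0$, the random play moves from a MAX vertex $x$ to $\sigma(x)$, from a MIN vertex $x$ to $\tau(x)$, from a random vertex $x$ to an out-neighbour drawn according to $p_x$ independently, and stays forever at a sink once reached. The play's value is $\mathrm{Val}(s)$ if it reaches sink $s$ and $0$ otherwise; $v^G_{\sigma,\tau}(x_0)$ is its expectation. A best response to $\sigma$ is a positional MIN strategy $\tau$ with $v_{\sigma,\tau}\le v_{\sigma,\tau'}$ pointwise for all MIN strategies $\tau'$; positional best responses exist, and $v^G_\sigma:=v^G_{\sigma,\tau}$ for any best response $\tau$. Transformed game: for a set $A$ of arcs of $G$ and $f:A\to\mathbb{Q}$, $G[A,f]$ is obtained from a copy of $G$ by replacing each arc $e=(x,y)\in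 A$ by an arc $(x,s_e)$ to a new sink $s_e$ of value $f(e)$ (for random $x$, $p_x(s_e)=p_x(y)$); $y$ is kept. $G[A,\sigma]$ is $G[A,f]$ with $f((x,y))=v^G_\sigma(y)$. Strategies of $G$ and of $G[A,\sigma]$ are identified (a MAX vertex $x$ with $\sigma(x)=y$, $(x,y)\in A$, moves to $s_{(x,y)}$ in $G[A,\sigma]$). *)

(* Defs.v *)
From HB Require Import structures.
From mathcomp Require Import all_boot all_order all_algebra.
From mathcomp Require Import all_classical all_reals all_analysis.
Set Implicit Arguments. Unset Strict Implicit. Unset Printing Implicit Defensive.
Import Order.TTheory GRing.Theory Num.Theory.
Import numFieldNormedType.Exports.
Local Open Scope ring_scope.

Inductive vkind := VMax | VMin | VRand | VSink.

(* A (candidate) simple stochastic game on the finite vertex type V.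
   Probabilities and sink values are stored as elements of the real
   field R; [wf_ssg] demands that they are rational. *)
Record ssg (R : realType) (V : finType) := SSG {
  ssg_kind : V -> vkind;
  ssg_arc : rel V;
  ssg_prob : V -> V -> R;      (* prob x y = p_x(y), used for random x *)
  ssg_val : V -> R            (* Val(s), used for sinks s *)
}.

Definition is_max R V (G : ssg R V) x := if ssg_kind G x is VMax then true else false.
Definition is_min R V (G : ssg R V) x := if ssg_kind G x is VMin then true else false.
Definition is_rand R V (G : ssg R V) x := if ssg_kind G x is VRand then true else false.
Definition is_sink R V (G : ssg R V) x := if ssg_kind G x is VSink then true else false.

Definition is_rat (R : realType) (r : R) := exists q : rat, r = ratr q.

Definition wf_ssg R V (G : ssg R V) : Prop :=
  [/\ (exists s, is_sink G s),
      (forall x, ~~ is_sink G x -> exists y, ssg_arc G x y),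
      (forall s, is_sink G s -> forall y, ssg_arc G s y = (y == s)),
      (forall x, is_rand G x ->
         [/\ forall y, ssg_arc G x y -> 0 < ssg_prob G x y,
             forall y, ssg_arc G x y -> is_rat (ssg_prob G x y)
           & \sum_(y | ssg_arc G x y) ssg_prob G x y = 1])
    & (forall s, is_sink G s -> [/\ is_rat (ssg_val G s), 0 <= ssg_val G s & ssg_val G s <= 1])].

(* Positional strategies (total functions; only their values on MAX resp.
   MIN vertices matter). *)
Definition max_strategy R V (G : ssg R V) (sigma : V -> V) : bool :=
  [forall x, is_max G x ==> ssg_arc G x (sigma x)].
Definition min_strategy R V (G : ssg R V) (tau : V -> V) : bool :=
  [forall x, is_min G x ==> ssg_arc G x (tau x)].

(* n_step G sigma tau n x = expected value at time n of the random play from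
   x, i.e. E[ Val(X_n) ; X_n is a sink ].  Since sinks are absorbing this is
   nondecreasing in n and tends to the expectation of the play's value. *)
Fixpoint n_step R V (G : ssg R V) (sigma tau : V -> V) (n : nat) : V -> R :=
  match n with
  | 0 => fun x => if is_sink G x then ssg_val G x else 0
  | n'.+1 => fun x =>
      match ssg_kind G x with
      | VSink => ssg_val G x
      | VMax => n_step G sigma tau n' (sigma x)
      | VMin => n_step G sigma tau n' (tau x)
      | VRand => \sum_(y | ssg_arc G x y) ssg_prob G x y * n_step G sigma tau n' y
      end
  end.

Definition play_value R V (G : ssg R V) (sigma tau : V -> V) (x : V) : R :=
  limn (fun n => n_step G sigma tau n x).

Definition best_response R V (G : ssg R V) (sigma : V -> V) (tau : {ffun V -> V}) : bool :=
  min_strategy G tau &&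
  [forall tau' : {ffun V -> V}, min_strategy G tau' ==>
     [forall x, play_value G sigma tau x <= play_value G sigma tau' x]].

(* v^G_sigma := v^G_{sigma,tau} for a best response tau (all best responses
   give the same values; the fallback branch never happens for an SSG,
   since positional best responses exist). *)
Definition vsigma R V (G : ssg R V) (sigma : V -> V) : V -> R :=
  match [pick tau : {ffun V -> V} | best_response G sigma tau] with
  | Some tau => play_value G sigma tau
  | None => fun _ => 0
  end.

(* Transformed game G[A,f]: vertices V + A (a new sink s_e for each e in A). *)
Definition tvert (V : finType) (A : {set V * V}) : finType :=
  (V + {e : V * V | e \in A})%type.

Definition tgame R V (G : ssg R V) (A : {set V * V}) (f : V * V -> R)
  : ssg R (tvert A) :=
  @SSG R (tvert A)
    (fun u => match u with inl x => ssg_kind G x | inr _ => VSink end)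
    (fun u w => match u, w with
                | inl x, inl y => ssg_arc G x y && ((x, y) \notin A)
                | inl x, inr e => (val e).1 == x
                | inr e, inr e' => e == e'
                | inr _, inl _ => false
                end)
    (fun u w => match u, w with
                | inl x, inl y => ssg_prob G x y
                | inl x, inr e => if (val e).1 == x then ssg_prob G x (val e).2 else 0
                | _, _ => 0
                end)
    (fun u => match u with inl x => ssg_val G x | inr e => f (val e) end).

Definition tgame_sigma R V (G : ssg R V) (A : {set V * V}) (sigma : V -> V) :=
  tgame G A (fun e => vsigma G sigma e.2).

Definition lift_strat (V : finType) (A : {set V * V}) (s : V -> V) : tvert A -> tvert A :=
  fun u => match u with
           | inl x => match insub (x, s x) with
                      | Some e => inr e
                      | None => inl (s x)
                      end
           | inr e => inr e
           end.
Arguments lift_strat {V} A s _.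

(* Main.v *)
Require Import Defs.
From HB Require Import structures.
From mathcomp Require Import all_boot all_order all_algebra.
From mathcomp Require Import all_classical all_reals all_analysis.
Unset Printing Implicit Defensive.
Import Order.TTheory GRing.Theory Num.Theory.
Import numFieldNormedType.Exports.
Local Open Scope classical_set_scope.
Local Open Scope ring_scope.

Section Gen.
Variables (R : realType) (V : finType) (H : ssg R V).

Definition nice :=
  [/\ (forall x, ssg_kind H x = VSink -> 0 <= ssg_val H x <= 1),
      (forall x, ssg_kind H x = VRand ->
          (forall y, ssg_arc H x y -> 0 <= ssg_prob H x y) /\
          \sum_(y | ssg_arc H x y) ssg_prob H x y = 1)
    & (forall x, ssg_kind H x = VMin -> exists y, ssg_arc H x y)].

Hypothesis Hn : nice.

Lemma nice_sink x : ssg_kind H x = VSink -> 0 <= ssg_val H x <= 1.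
Proof. by move: Hn => -[h _ _]; apply: h. Qed.
Lemma nice_rand x : ssg_kind H x = VRand ->
  (forall y, ssg_arc H x y -> 0 <= ssg_prob H x y) /\
  \sum_(y | ssg_arc H x y) ssg_prob H x y = 1.
Proof. by move: Hn => -[_ h _]; apply: h. Qed.
Lemma nice_min x : ssg_kind H x = VMin -> exists y, ssg_arc H x y.
Proof. by move: Hn => -[_ _ h]; apply: h. Qed.

Variable sigma : V -> V.

Lemma step_bnd (tau : V -> V) n x : 0 <= n_step H sigma tau n x <= 1.
Proof.
elim: n x => [|n IH] x /=.
  rewrite /is_sink; case E: (ssg_kind H x) => /=; try exact: nice_sink;
  by rewrite lexx ler01.
case E: (ssg_kind H x) => //; try exact: nice_sink.
have [Hp Hs] := nice_rand _ E.
apply/andP; split.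
  by apply: sumr_ge0 => y hy; apply: mulr_ge0; [exact: Hp|case/andP: (IH y)].
rewrite -Hs; apply: ler_sum => y hy.
by apply: ler_piMr; [exact: Hp| case/andP: (IH y)].
Qed.

Lemma step_mono1 (tau : V -> V) n x : n_step H sigma tau n x <= n_step H sigma tau n.+1 x.
Proof.
elim: n x => [|n IH] x.
  have h0 y : 0 <= n_step H sigma tau 0 y by case/andP: (step_bnd tau 0 y).
  rewrite /=; case E: (ssg_kind H x) => /=; rewrite {1}/is_sink E /= ?lexx //; try exact: h0.
  apply: sumr_ge0 => y hy; apply: mulr_ge0; first exact: (proj1 (nice_rand _ E)).
  exact: h0.
rewrite [n_step _ _ _ n.+1 x]/= [n_step _ _ _ n.+2 x]/=.
case E: (ssg_kind H x) => //.
apply: ler_sum => y hy; apply: ler_wpM2l; first exact: (proj1 (nice_rand _ E)).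
exact: IH.
Qed.

Lemma step_mono (tau : V -> V) x : {homo (fun n => n_step H sigma tau n x) : n m / (n <= m)%N >-> n <= m}.
Proof.
move=> n m; elim: m => [|m IH]; first by rewrite leqn0 => /eqP ->.
rewrite leq_eqVlt => /orP [/eqP -> //|]; rewrite ltnS => /IH h.
exact: le_trans h (step_mono1 _ _ _).
Qed.

Lemma step_cvg (tau : V -> V) x : cvgn (fun n => n_step H sigma tau n x).
Proof.
apply: nondecreasing_is_cvgn; first exact: step_mono.
exists 1 => _ [n _ <-]; by case/andP: (step_bnd tau n x).
Qed.

Lemma step_le_pv (tau : V -> V) n x : n_step H sigma tau n x <= play_value H sigma tau x.
Proof. exact: (nondecreasing_cvgn_le (step_mono tau x) (step_cvg tau x) n). Qed.

Lemma pv_le (tau : V -> V) x c : (forall n, n_step H sigma tau n x <= c) -> play_value H sigma tau x <= c.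
Proof.
move=> h; apply: limr_le; first exact: step_cvg.
by near=> n; apply: h.
Unshelve. all: by end_near.
Qed.

Lemma pv_bnd (tau : V -> V) x : 0 <= play_value H sigma tau x <= 1.
Proof.
apply/andP; split.
  by apply: le_trans (step_le_pv tau 0 x); case/andP: (step_bnd tau 0 x).
by apply: pv_le => n; case/andP: (step_bnd tau n x).
Qed.


Lemma pv_cvg (tau : V -> V) x : n_step H sigma tau n x @[n --> \oo] --> play_value H sigma tau x.
Proof.
have h := nondecreasing_cvgn (step_mono tau x) _.
have hb : has_ubound (range (fun n => n_step H sigma tau n x)).
  by exists 1 => _ [n _ <-]; case/andP: (step_bnd tau n x).
rewrite /play_value (cvg_lim _ (h hb)) //; exact: h.
Qed.

Lemma pv_next (tau : V -> V) x : n_step H sigma tau n.+1 x @[n --> \oo] --> play_value H sigma tau x.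
Proof. by have := pv_cvg tau x; rewrite -cvg_shiftS. Qed.

Lemma pv_eq (tau : V -> V) x (f : nat -> R) c :
  (forall n, n_step H sigma tau n.+1 x = f n) -> f n @[n --> \oo] --> c ->
  play_value H sigma tau x = c.
Proof.
move=> e h; have := pv_next tau x.
have -> : (fun n => n_step H sigma tau n.+1 x) = f by apply: funext => n; exact: e.
move=> h'; exact: (cvg_unique _ h' h).
Qed.

Lemma pv_max (tau : V -> V) x : ssg_kind H x = VMax ->
  play_value H sigma tau x = play_value H sigma tau (sigma x).
Proof.
move=> E; apply: (pv_eq _ _ (fun n => n_step H sigma tau n (sigma x))); last exact: pv_cvg.
by move=> n /=; rewrite E.
Qed.

Lemma pv_min (tau : V -> V) x : ssg_kind H x = VMin ->
  play_value H sigma tau x = play_value H sigma tau (tau x).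
Proof.
move=> E; apply: (pv_eq _ _ (fun n => n_step H sigma tau n (tau x))); last exact: pv_cvg.
by move=> n /=; rewrite E.
Qed.

Lemma pv_sink (tau : V -> V) x : ssg_kind H x = VSink ->
  play_value H sigma tau x = ssg_val H x.
Proof.
move=> E; apply: (pv_eq _ _ (fun n => ssg_val H x)); last exact: cvg_cst.
by move=> n /=; rewrite E.
Qed.

Lemma pv_rand (tau : V -> V) x : ssg_kind H x = VRand ->
  play_value H sigma tau x =
  \sum_(y | ssg_arc H x y) ssg_prob H x y * play_value H sigma tau y.
Proof.
move=> E; apply: (pv_eq _ _ (fun n => \sum_(y | ssg_arc H x y) ssg_prob H x y * n_step H sigma tau n y)).
  by move=> n /=; rewrite E.
apply: cvg_big => //; first exact: add_continuous.
move=> y _; apply: cvgMl_tmp; exact: pv_cvg.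
Qed.

Lemma pv_least (tau : V -> V) (w : V -> R) :
  (forall x, 0 <= w x) ->
  (forall x, ssg_kind H x = VSink -> ssg_val H x <= w x) ->
  (forall x, ssg_kind H x = VMax -> w (sigma x) <= w x) ->
  (forall x, ssg_kind H x = VMin -> w (tau x) <= w x) ->
  (forall x, ssg_kind H x = VRand -> \sum_(y | ssg_arc H x y) ssg_prob H x y * w y <= w x) ->
  forall x, play_value H sigma tau x <= w x.
Proof.
move=> w0 ws wM wm wr x; apply: pv_le => n; elim: n x => [|n IH] x /=.
  by rewrite /is_sink; case E: (ssg_kind H x) => /=; try exact: w0; exact: ws.
case E: (ssg_kind H x).
- exact: le_trans (IH _) (wM _ E).
- exact: le_trans (IH _) (wm _ E).
- apply: le_trans (wr _ E); apply: ler_sum => y hy; apply: ler_wpM2l; last exact: IH.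
  exact: (proj1 (nice_rand _ E)).
- exact: ws.
Qed.


Lemma is_minP x : is_min H x <-> ssg_kind H x = VMin.
Proof. by rewrite /is_min; case: (ssg_kind H x). Qed.

Definition t0 : {ffun V -> V} := [ffun x => odflt x [pick y | ssg_arc H x y]].

Lemma t0_arc x : ssg_kind H x = VMin -> ssg_arc H x (t0 x).
Proof.
move=> E; rewrite /t0 ffunE; case: pickP => //= h.
by have [y hy] := nice_min _ E; move: (h y); rewrite hy.
Qed.

Lemma t0_ms : min_strategy H t0.
Proof. by apply/forallP => x; apply/implyP => /is_minP; exact: t0_arc. Qed.

Definition tbest x : {ffun V -> V} :=
  [arg min_(t < t0 | min_strategy H t) play_value H sigma t x]%O.
Definition vstar x := play_value H sigma (tbest x) x.

Lemma tbest_spec x : min_strategy H (tbest x) /\ forall t : {ffun V -> V}, min_strategy H t -> vstar x <= play_value H sigma t x.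
Proof.
rewrite /vstar /tbest; case: Order.TotalTheory.arg_minP; first exact: t0_ms.
by move=> t h1 h2; split => // t' /h2.
Qed.

Definition greedy (w : V -> R) : {ffun V -> V} :=
  [ffun x => [arg min_(y < t0 x | ssg_arc H x y) w y]%O].

Lemma greedy_spec w x : ssg_kind H x = VMin ->
  ssg_arc H x (greedy w x) /\ forall y, ssg_arc H x y -> w (greedy w x) <= w y.
Proof.
move=> E; rewrite /greedy ffunE; case: Order.TotalTheory.arg_minP; first exact: t0_arc.
by move=> y h1 h2; split => // y' /h2.
Qed.

Lemma greedy_ms w : min_strategy H (greedy w).
Proof. by apply/forallP => x; apply/implyP => /is_minP E; case: (greedy_spec w _ E). Qed.

Lemma vstar_bnd x : 0 <= vstar x <= 1.
Proof. exact: pv_bnd. Qed.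

Lemma vstar_sink x : ssg_kind H x = VSink -> vstar x = ssg_val H x.
Proof. exact: pv_sink. Qed.

Lemma vstar_max x : ssg_kind H x = VMax -> vstar (sigma x) <= vstar x.
Proof.
move=> E; rewrite {2}/vstar pv_max //; apply: (proj2 (tbest_spec _)).
exact: (proj1 (tbest_spec _)).
Qed.

Lemma vstar_rand x : ssg_kind H x = VRand ->
  \sum_(y | ssg_arc H x y) ssg_prob H x y * vstar y <= vstar x.
Proof.
move=> E; rewrite {2}/vstar pv_rand //; apply: ler_sum => y hy.
apply: ler_wpM2l; first exact: (proj1 (nice_rand _ E)).
apply: (proj2 (tbest_spec _)); exact: (proj1 (tbest_spec _)).
Qed.

Lemma vstar_min x : ssg_kind H x = VMin ->
  exists y, ssg_arc H x y /\ vstar y <= vstar x.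
Proof.
move=> E; have [ms _] := tbest_spec x.
exists (tbest x x); split.
  by move/forallP: ms => /(_ x) /implyP; apply; apply/is_minP.
rewrite {2}/vstar (pv_min _ _ E); apply: (proj2 (tbest_spec _)); exact: ms.
Qed.

Definition tstar := greedy vstar.

Lemma tstar_val x : play_value H sigma tstar x = vstar x.
Proof.
apply/le_anti/andP; split; last first.
  by apply: (proj2 (tbest_spec _)); exact: greedy_ms.
apply: pv_least => {x}x.
- by case/andP: (vstar_bnd x).
- by move=> E; rewrite vstar_sink.
- exact: vstar_max.
- move=> E; have [y [hy le]] := vstar_min _ E.
  apply: le_trans le; exact: (proj2 (greedy_spec vstar _ E) y hy).
- exact: vstar_rand.
Qed.

Lemma tstar_best : best_response H sigma tstar.
Proof.
apply/andP; split; first exact: greedy_ms.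
apply/forallP => t; apply/implyP => ht; apply/forallP => x.
rewrite tstar_val; exact: (proj2 (tbest_spec x)).
Qed.

Lemma vsigmaE x : vsigma H sigma x = vstar x.
Proof.
rewrite /vsigma; case: pickP => [t /andP [mt /forallP bt]|].
  apply/le_anti/andP; split; last by apply: (proj2 (tbest_spec x)).
  rewrite -tstar_val; move/implyP: (bt tstar) => /(_ (greedy_ms _)) /forallP; exact.
by move=> /(_ tstar); rewrite tstar_best.
Qed.

Lemma vs_bnd x : 0 <= vsigma H sigma x <= 1.
Proof. rewrite vsigmaE; exact: vstar_bnd. Qed.
Lemma vs_sink x : ssg_kind H x = VSink -> vsigma H sigma x = ssg_val H x.
Proof. rewrite vsigmaE; exact: vstar_sink. Qed.
Lemma vs_max x : ssg_kind H x = VMax -> vsigma H sigma (sigma x) <= vsigma H sigma x.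
Proof. rewrite !vsigmaE; exact: vstar_max. Qed.
Lemma vs_rand x : ssg_kind H x = VRand ->
  \sum_(y | ssg_arc H x y) ssg_prob H x y * vsigma H sigma y <= vsigma H sigma x.
Proof. rewrite vsigmaE; under eq_bigr do rewrite vsigmaE; exact: vstar_rand. Qed.
Lemma vs_min x : ssg_kind H x = VMin ->
  exists y, ssg_arc H x y /\ vsigma H sigma y <= vsigma H sigma x.
Proof. by move=> E; have [y hy] := vstar_min _ E; exists y; rewrite !vsigmaE. Qed.

Lemma vs_least (w : V -> R) :
  (forall x, 0 <= w x) ->
  (forall x, ssg_kind H x = VSink -> ssg_val H x <= w x) ->
  (forall x, ssg_kind H x = VMax -> w (sigma x) <= w x) ->
  (forall x, ssg_kind H x = VMin -> forall c, (forall y, ssg_arc H x y -> c <= w y) -> c <= w x) ->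
  (forall x, ssg_kind H x = VRand -> \sum_(y | ssg_arc H x y) ssg_prob H x y * w y <= w x) ->
  forall x, vsigma H sigma x <= w x.
Proof.
move=> w0 ws wM wm wr x; rewrite vsigmaE.
apply: le_trans (pv_least (greedy w) w w0 ws wM _ wr x).
  by apply: (proj2 (tbest_spec x)); exact: greedy_ms.
move=> y E; apply: wm => // z hz; exact: (proj2 (greedy_spec w _ E) z hz).
Qed.

End Gen.
Arguments nice {R V}.
Arguments vs_bnd {R V H}.
Arguments vs_sink {R V H}.
Arguments vs_max {R V H}.
Arguments vs_rand {R V H}.
Arguments vs_min {R V H}.
Arguments vs_least {R V H}.
Section Main.
Variables (R : realType) (V : finType) (G : ssg R V) (A : {set V * V}) (sigma : V -> V).
Hypothesis hwf : wf_ssg G.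
Hypothesis hA : forall e, e \in A -> ssg_arc G e.1 e.2.

Lemma G_nice : nice G.
Proof.
case: hwf => _ har _ hr hs; split.
- move=> x E; have hx : is_sink G x by rewrite /is_sink E.
  by case: (hs x hx) => _ -> ->.
- move=> x E; have hx : is_rand G x by rewrite /is_rand E.
  case: (hr x hx) => hp _ hsum; split => // y hy; exact: ltW (hp y hy).
- move=> x E; apply: har; by rewrite /is_sink E.
Qed.

Let u := vsigma G sigma.
Let H := tgame_sigma G A sigma.
Let s' := lift_strat A sigma.

Lemma u_bnd x : 0 <= u x <= 1.
Proof. exact: (vs_bnd G_nice). Qed.

Lemma esum (F : V * V -> R) x :
  \sum_(e : {e : V * V | e \in A} | (val e).1 == x) F (val e) = \sum_(y | (x, y) \in A) F (x, y).
Proof.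
rewrite -(big_sub_cond A (fun e => e.1 == x)).
rewrite (reindex_onto (fun y => (x, y)) snd); last by move=> [a b] /andP [_ /eqP /= ->].
by under eq_bigl => y do rewrite /= !eqxx !andbT.
Qed.

Lemma gsum (f : V -> R) x :
  \sum_(y | ssg_arc G x y) ssg_prob G x y * f y =
  \sum_(y | ssg_arc G x y && ((x, y) \notin A)) ssg_prob G x y * f y +
  \sum_(e : {e : V * V | e \in A} | (val e).1 == x) ssg_prob G x (val e).2 * f (val e).2.
Proof.
rewrite (bigID (fun y => (x, y) \in A)) /= addrC; congr (_ + _).
rewrite (esum (fun e => ssg_prob G x e.2 * f e.2)); apply: eq_bigl => y.
by case h: ((x, y) \in A); rewrite ?andbT ?andbF //; exact: (hA _ h).
Qed.

Lemma hsum (g : tvert A -> R) x :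
  \sum_(t | ssg_arc H (inl x) t) ssg_prob H (inl x) t * g t =
  \sum_(y | ssg_arc G x y && ((x, y) \notin A)) ssg_prob G x y * g (inl y) +
  \sum_(e : {e : V * V | e \in A} | (val e).1 == x) ssg_prob G x (val e).2 * g (inr e).
Proof.
rewrite big_sumType /=; congr (_ + _).
by apply: eq_bigr => e /= ->.
Qed.


Lemma s'_spec x : (s' (inl x) = inl (sigma x) /\ (x, sigma x) \notin A) \/
  (exists e, s' (inl x) = inr e /\ val e = (x, sigma x)).
Proof.
rewrite /s' /lift_strat; case: insubP => [e he ev|hn]; [right; exists e | left] => //.
Qed.

Lemma H_nice : nice H.
Proof.
have [_ har _ hr hs] := hwf.
split.
- case=> [x|e] /= E; first exact: (nice_sink _ _ _ G_nice x E).
  exact: u_bnd.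
- case=> [x|e] //= E; have hx : is_rand G x by rewrite /is_rand E.
  have [hp _ hsm] := hr x hx.
  split.
    case=> [y|e] /=; first by case/andP => /hp /ltW.
    move=> /eqP he; rewrite he eqxx; apply: ltW; apply: hp; rewrite -he; exact: hA (valP e).
  have e1 : forall (W : finType) (P : pred W) (F : W -> R), \sum_(t | P t) F t = \sum_(t | P t) F t * 1.
    by move=> W P F; apply: eq_bigr => *; rewrite mulr1.
  have h1 := gsum (fun=> 1) x; rewrite /= -e1 hsm in h1; rewrite e1 hsum; exact: esym h1.
- case=> [x|e] //= E.
  have [y hy] : exists y, ssg_arc G x y by apply: har; rewrite /is_sink E.
  case h: ((x, y) \in A).
    exists (inr (exist _ (x, y) h)); by rewrite /= eqxx.
  by exists (inl y); rewrite /= hy h.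
Qed.


Let W := vsigma H s'.

Lemma W_le x : W (inl x) <= u x.
Proof.
pose w (t : tvert A) := match t with inl y => u y | inr e => u (val e).2 end.
apply: (vs_least H_nice s' w _ _ _ _ _ (inl x)).
- by case=> [y|e] /=; [case/andP: (u_bnd y) | case/andP: (u_bnd (val e).2)].
- case=> [y|e] /= E; last by [].
  by rewrite /u (vs_sink G_nice sigma y E).
- case=> [y|e] E; last by move: E.
  have {}E : ssg_kind G y = VMax by [].
  change (w (s' (inl y)) <= u y).
  case: (s'_spec y) => [[-> _]|[e [-> ev]]] /=; last rewrite ev /=;
  exact: (vs_max G_nice sigma y E).
- case=> [y|e] //= E c hc.
  have [z [hz le]] := vs_min G_nice sigma y E.
  case h: ((y, z) \in A).
    by apply: le_trans (hc (inr (exist _ (y, z) h)) _) le; rewrite /= eqxx.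
  by apply: le_trans (hc (inl z) _) le; rewrite /= hz h.
- case=> [y|e] //= E.
  rewrite hsum /= -(gsum u); exact: (vs_rand G_nice sigma y E).
Qed.

Lemma u_le x : u x <= W (inl x).
Proof.
pose u2 y := Order.min (W (inl y)) (u y).
have m1 y : u2 y <= W (inl y) by rewrite ge_min lexx.
have m2 y : u2 y <= u y by rewrite ge_min lexx orbT.
have Wsinkr e : W (inr e) = u (val e).2 by rewrite /W (vs_sink H_nice s' (inr e) erefl).
apply: le_trans (vs_least G_nice sigma u2 _ _ _ _ _ x) (m1 x).
- move=> y; rewrite le_min; case/andP: (vs_bnd H_nice s' (inl y)) => -> _.
  by case/andP: (u_bnd y).
- move=> y E; rewrite le_min /W (vs_sink H_nice s' (inl y) E) /u (vs_sink G_nice sigma y E).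
  by rewrite lexx.
- move=> y E; rewrite le_min; apply/andP; split.
    have := vs_max H_nice s' (inl y) E.
    case: (s'_spec y) => [[-> _]|[e [-> ev]]] h; apply: le_trans h.
      exact: m1.
    by rewrite -/W Wsinkr ev /=.
  exact: le_trans (m2 _) (vs_max G_nice sigma y E).
- move=> y E c hc; rewrite le_min; apply/andP; split.
    have [t [ht le]] := vs_min H_nice s' (inl y) E.
    apply: le_trans le; case: t ht => [z|e] /=.
      by case/andP => hz _; apply: le_trans (hc z hz) (m1 z).
    move/eqP => he; have hz : ssg_arc G y (val e).2 by rewrite -he; exact: hA (valP e).
    by apply: le_trans (hc _ hz) _; rewrite -/W Wsinkr.
  have [z [hz le]] := vs_min G_nice sigma y E.
  exact: le_trans (hc z hz) (le_trans (m2 z) le).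
- move=> y E; have hp := proj1 (nice_rand _ _ _ G_nice y E).
  rewrite le_min; apply/andP; split.
    apply: le_trans (vs_rand H_nice s' (inl y) E).
    rewrite hsum gsum; apply: lerD; apply: ler_sum => z hz.
      by apply: ler_wpM2l; [apply: hp; case/andP: hz|exact: m1].
    apply: ler_wpM2l; first by apply: hp; rewrite -(eqP hz); exact: hA (valP z).
    by rewrite -/W Wsinkr.
  apply: le_trans (vs_rand G_nice sigma y E).
  by apply: ler_sum => z hz; apply: ler_wpM2l; [exact: hp|exact: m2].
Qed.

Lemma main x : u x = W (inl x).
Proof. by apply/le_anti; rewrite u_le W_le. Qed.

End Main.

Theorem lemma12 (R : realType) (V : finType) (G : ssg R V)
  (A : {set V * V}) (sigma : V -> V) :
  wf_ssg G ->
  (forall e, e \in A -> ssg_arc G e.1 e.2) ->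
  max_strategy G sigma ->
  forall x : V,
    vsigma G sigma x = vsigma (tgame_sigma G A sigma) (lift_strat A sigma) (inl x).
Proof. by move=> hwf hA _ x; exact: main. Qed.
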